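(* Let $\mathcal{M}$ be either $\mathcal{M}^{gen}$ or $\mathcal{M}^{inj}$, let $\Omega$ be a finite collection of finite metric spaces, and let $\mathfrak{C}=\mathfrak{C}^\Omega$ be the clustering functor on $\mathcal{M}$ represented by $\Omega$. Then $\mathfrak{C}=\mathfrak{R}_1\circ\mathfrak{T}^\Omega$; that is, for every finite metric space $(X,d_X)$, two points $x,x'\in X$ lie in the same block of $\mathfrak{C}^\Omega(X,d_X)$ if and only if there exist $x_0,\ldots,x_k\in X$ with $x_0=x$, $x_k=x'$ and $d_X^\Omega(x_i,x_{i+1})\leq 1$ for all $i$.
   Context: $\mathcal{M}^{gen}$ is the category whose objects are finite metric spaces and whose morphisms are distance non-increasing maps ($d_Y(f(x),f(x'))\leq d_X(x,x')$); $\mathcal{M}^{inj}$ has the same objects and as morphisms the injective distance non-increasing maps. For a collection $\Omega$ of finite metric spaces, $\mathfrak{C}^\Omega$ assigns to a finite metric space $X$ the partition in which $x,x'$ lie in the same block iff there exist $z_0,\ldots,z_k\in X$ with $z_0=x$, $z_k=x'$, spaces $\omega_1,\ldots,\omega_k\in\Omega$, points $\alpha_i,\beta_i\in\omega_i$ and morphisms $f_i\in\mathrm{Mor}_{\mathcal{M}}(\omega_i,X)$ with $f_i(\alpha_i)=z_{i-1}$, $f_i(\beta_i)=z_i$. For $\lambda>0$, $\lambda\cdot\omega$ denotes $(\omega,\lambda d_\omega)$. Define $W_X^\Omega:X\times X\to[0,+\infty]$ by $W_X^\Omega(x,x)=0$ and, for $x\neq x'$, $W_X^\Omega(x,x')=\inf\{\lambda>0:\exists\,\omega\in\Omega,\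 \phi\in\mathrm{Mor}_{\mathcal{M}}(\lambda\cdot\omega,X)\text{ with }\{x,x'\}\subset\mathrm{im}(\phi)\}$ (infimum of the empty set is $+\infty$). Define $d_X^\Omega(x,x')=\min\{\max_i W_X^\Omega(x_i,x_{i+1}):x_0=x,\ldots,x_k=x'\text{ in }X\}$ (the maximal subdominant ultrametric of $W_X^\Omega$); $\mathfrak{T}^\Omega(X,d_X)=(X,d_X^\Omega)$. $\mathfrak{R}_1$ assigns to a (possibly extended) metric space the partition into equivalence classes of chains with consecutive distances $\leq 1$. *)

(* Defs.v *)
From Stdlib Require Import List.
From HB Require Import structures.
From mathcomp Require Import all_boot all_order all_algebra.
From mathcomp Require Import boolp classical_sets reals constructive_ereal ereal.
Set Implicit Arguments. Unset Strict Implicit. Unset Printing Implicit Defensive.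
Import Order.TTheory GRing.Theory Num.Theory.
Local Open Scope ring_scope.
Local Open Scope classical_set_scope.

Record fmet (R : realType) := FMet {
  pt : finType;
  dist : pt -> pt -> R;
  dist0 : forall x y, dist x y = 0 <-> x = y;
  distC : forall x y, dist x y = dist y x;
  distT : forall x y z, dist x z <= dist x y + dist y z
}.

(* Morphisms: distance non-increasing maps (category M^gen, inj = false)
   or injective distance non-increasing maps (category M^inj, inj = true),
   stated for arbitrary distance functions dA on the source and dB on the
   target (so that morphisms out of a rescaled space lambda.omega can be
   written with dA := fun a b => lambda * dist omega a b). *)
Definition is_mor (R : realType) (inj : bool) (A B : finType)
  (dA : A -> A -> R) (dB : B -> B -> R) (f : A -> B) : Prop :=
  (forall a a', dB (f a) (f a') <= dA a a') /\ (inj -> injective f).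

Fixpoint links (T : Type) (r : T -> T -> Prop) (x : T) (s : seq T) : Prop :=
  match s with
  | [::] => True
  | y :: s' => r x y /\ links r y s'
  end.

Definition Chain (T : Type) (r : T -> T -> Prop) (x x' : T) : Prop :=
  exists s : seq T, last x s = x' /\ links r x s.

Definition clusterC (R : realType) (inj : bool) (Om : seq (fmet R))
  (X : fmet R) (x x' : pt X) : Prop :=
  Chain (fun z z' => exists om : fmet R, In om Om /\
           exists (a b : pt om) (f : pt om -> pt X),
             is_mor inj (@dist R om) (@dist R X) f /\ f a = z /\ f b = z')
        x x'.

Arguments clusterC {R} inj Om X x x'.

Definition WOm (R : realType) (inj : bool) (Om : seq (fmet R))
  (X : fmet R) (x x' : pt X) : \bar R :=
  if x == x' then 0%E else
  ereal_inf [set (l%:E)%E | l in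
    [set l : R | 0 < l /\ exists om : fmet R, In om Om /\
       exists phi : pt om -> pt X,
         is_mor inj (fun a b => l * dist a b) (@dist R X) phi /\
         (exists a, phi a = x) /\ (exists b, phi b = x')]].

Arguments WOm {R} inj Om X x x'.

Fixpoint chain_max (T : Type) (R : realType) (W : T -> T -> \bar R)
  (x : T) (s : seq T) : \bar R :=
  match s with
  | [::] => 0%E
  | y :: s' => Order.max (W x y) (chain_max W y s')
  end.

(* d_X^Omega: maximal subdominant ultrametric of W_X^Omega
   (min over chains; written as an infimum, which is attained) *)
Definition dOm (R : realType) (inj : bool) (Om : seq (fmet R))
  (X : fmet R) (x x' : pt X) : \bar R :=
  ereal_inf [set chain_max (WOm inj Om X) x s | s in
              [set s : seq (pt X) | last x s = x']].

Arguments dOm {R} inj Om X x x'.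

Definition R1TOm (R : realType) (inj : bool) (Om : seq (fmet R))
  (X : fmet R) (x x' : pt X) : Prop :=
  Chain (fun z z' => (dOm inj Om X z z' <= 1%:E)%E) x x'.

Arguments R1TOm {R} inj Om X x x'.

(* Main.v *)
Require Import Defs.
From mathcomp Require Import all_boot all_order all_algebra.
From mathcomp Require Import boolp classical_sets reals constructive_ereal ereal.
Set Implicit Arguments. Unset Strict Implicit. Unset Printing Implicit Defensive.
Import Order.TTheory GRing.Theory Num.Theory.
Local Open Scope ring_scope.
Local Open Scope classical_set_scope.

Lemma links_cat (T : Type) (r : T -> T -> Prop) x s1 s2 :
  links r x s1 -> links r (last x s1) s2 -> links r x (s1 ++ s2).
Proof.
elim: s1 x => [|y s IH] x //= [H1 H2] H3; split => //; exact: IH.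
Qed.

Lemma Chain_trans (T : Type) (r : T -> T -> Prop) x y z :
  Chain r x y -> Chain r y z -> Chain r x z.
Proof.
move=> [s1 [E1 L1]] [s2 [E2 L2]]; exists (s1 ++ s2); split.
  by rewrite last_cat E1.
by apply: links_cat; rewrite // E1.
Qed.

Lemma Chain_one (T : Type) (r : T -> T -> Prop) x y : r x y -> Chain r x y.
Proof. by move=> H; exists [:: y]. Qed.

Lemma Chain_refl (T : Type) (r : T -> T -> Prop) x : Chain r x x.
Proof. by exists [::]. Qed.

Lemma Chain_mono (T : Type) (r r' : T -> T -> Prop) x y :
  (forall a b, r a b -> Chain r' a b) -> Chain r x y -> Chain r' x y.
Proof.
move=> H [s [E L]]; subst y; elim: s x L => [|z s IH] x /=.
  by move=> _; exact: Chain_refl.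
move=> [H1 H2]; apply: Chain_trans (H _ _ H1) (IH _ H2).
Qed.

Lemma in_In (T : eqType) (s : seq T) x : x \in s -> List.In x s.
Proof.
elim: s => [|y s IH] //=; rewrite inE => /orP [/eqP ->|H]; [by left|right; exact: IH].
Qed.

Lemma fin_lb (R : realType) (T : Type) (s : seq T) (Q : T -> R -> Prop) :
  (forall i, exists m, 1 < m /\ Q i m) ->
  (forall i m m', Q i m -> m' <= m -> Q i m') ->
  exists m, 1 < m /\ forall i, List.In i s -> Q i m.
Proof.
move=> H Hm; elim: s => [|y s [m [m1 Hs]]].
  by exists 2; split => //; rewrite ltr1n.
have [my [my1 Hy]] := H y.
exists (Num.min m my); split; first by rewrite lt_min m1 my1.
move=> i /= [<-|Hi]; first by apply: Hm Hy _; rewrite ge_min lexx orbT.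
by apply: Hm (Hs _ Hi) _; rewrite ge_min lexx.
Qed.

Lemma dist_ge0 (R : realType) (X : fmet R) (a b : pt X) : 0 <= dist a b.
Proof.
have := distT a b a; rewrite (proj2 (dist0 a a) erefl) [dist b a]distC -mulr2n.
by rewrite pmulrn_lge0.
Qed.

Section Main.
Variables (R : realType) (inj : bool) (Om : seq (fmet R)) (X : fmet R).

Definition step (z z' : pt X) := exists om : fmet R, List.In om Om /\
           exists (a b : pt om) (f : pt om -> pt X),
             is_mor inj (@dist R om) (@dist R X) f /\ f a = z /\ f b = z'.

Lemma step_dOm z z' : step z z' -> (dOm inj Om X z z' <= 1%:E)%E.
Proof.
move=> [om [Hom [a [b [f [Hf [Ha Hb]]]]]]].
rewrite /dOm; case: (eqVneq z z') => [<-|ne].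
  apply: le_trans (ereal_inf_lbound _) _; first by exists [::].
  by rewrite /= lee_fin ler01.
apply: le_trans (ereal_inf_lbound _) _; first by exists [:: z'].
rewrite /= ge_max lee_fin ler01 andbT /WOm (negbTE ne).
apply: le_trans (ereal_inf_lbound _) _; last exact: lexx.
exists 1 => //; split => //; exists om; split => //; exists f; split.
  by split => [c d|]; [rewrite mul1r; exact: (proj1 Hf)|exact: (proj2 Hf)].
by split; [exists a|exists b].
Qed.

Lemma om_lb (i : fmet R) : exists m, 1 < m /\ forall (p q : pt X) (c e : pt i),
   0 < dist c e -> dist c e < dist p q -> m <= dist p q / dist c e.
Proof.
pose Q (t : pt X * pt X * pt i * pt i) (m : R) := let: (p, q, c, e) := t in
      0 < dist c e -> dist c e < dist p q -> m <= dist p q / dist c e.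
have Hex : forall t, exists m, 1 < m /\ Q t m.
  case=> [[[p q] c] e].
  case: (pselect (0 < dist c e /\ dist c e < dist p q)) => [[h1 h2]|hn].
    exists (dist p q / dist c e); split; last by move=> _ _.
    by rewrite ltr_pdivlMr // mul1r.
  by exists 2; split; [rewrite ltr1n|move=> h1 h2; exfalso; exact: hn].
have Hmo : forall t m m', Q t m -> m' <= m -> Q t m'.
  case=> [[[p q] c] e] m0 m' H Hle h1 h2; exact: le_trans Hle (H h1 h2).
have [m [m1 Hm]] := fin_lb (enum {: pt X * pt X * pt i * pt i}) Hex Hmo.
exists m; split => // p q c e; apply: (Hm (p, q, c, e)); apply: in_In; by rewrite mem_enum.
Qed.

Lemma key : exists m : R, 1 < m /\ forall p q,
  (WOm inj Om X p q < m%:E)%E -> p = q \/ step p q.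
Proof.
have [m [m1 Hm]] := @fin_lb R _ Om (fun om m => forall (p q : pt X) (c e : pt om),
   0 < dist c e -> dist c e < dist p q -> m <= dist p q / dist c e)
   om_lb (fun i m m' H Hle p q c e h1 h2 => le_trans Hle (H p q c e h1 h2)).
exists m; split => // p q; rewrite /WOm; case: (eqVneq p q) => [->|ne]; first by left.
move=> /ereal_inf_lt [y [l [l0 [om [Hom [phi [Hphi [[a Ha] [b Hb]]]]]]]] <-].
rewrite lte_fin => lm; right; exists om; split => //; exists a, b, phi; split => //.
split; last exact: (proj2 Hphi).
move=> c e; rewrite leNgt; apply/negP => lt.
have d0 := dist_ge0 c e.
move: d0; rewrite le_eqVlt => /orP [/eqP d0|dpos].
  move: lt; rewrite -d0; move/esym: d0 => /dist0 ->.
  by rewrite (proj2 (dist0 _ _) erefl) ltxx.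
have := Hm _ Hom _ _ _ _ dpos lt.
have Hce : dist (phi c) (phi e) <= l * dist c e := proj1 Hphi c e.
have H1 : dist (phi c) (phi e) / dist c e <= l by rewrite ler_pdivrMr.
move=> H2; have := le_trans H2 H1; by rewrite leNgt lm.
Qed.

End Main.

Theorem mainTheorem4 (R : realType) (inj : bool) (Om : seq (fmet R))
  (X : fmet R) (x x' : pt X) :
  clusterC inj Om X x x' <-> R1TOm inj Om X x x'.
Proof.
split.
  apply: Chain_mono => a b H; apply: Chain_one; exact: step_dOm H.
have [m [m1 Hm]] := key inj Om X.
apply: Chain_mono => a b H.
have : (dOm inj Om X a b < m%:E)%E.
  by apply: le_lt_trans H _; rewrite lte_fin.
move=> /ereal_inf_lt [y [s Es <-]].
rewrite -Es.
elim: s a {H Es} => [|z s IH] a /=; first by move=> _; exact: Chain_refl.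
rewrite gt_max => /andP [h1 h2].
apply: Chain_trans (IH _ h2).
case: (Hm _ _ h1) => [->|st]; first exact: Chain_refl.
exact: Chain_one.
Qed.
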